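(* Let $\mathsf{G}$ be a connected undirected graph on $N=\{1,\dots,n\}$ with edge set $E$ and symmetric positive edge weights $w_{ij}=w_{ji}>0$ for $\{i,j\}\in E$, and let $\mathbf{L}$ be its Laplacian, so that the symmetric irreducible consensus system reads $\dot x_i=\sum_{j:\{i,j\}\in E}w_{ij}(x_j-x_i)$, i.e. $\dot{\bm{x}}=-\mathbf{L}\bm{x}$. Fix $\alpha>0$ and let $M(\alpha)=\{\bm{x}\in\mathbb{R}^n_{>0}:\ \frac1n\sum_{i=1}^n x_i=\alpha\}$. For $\bm{x}\in M(\alpha)$ set $\bm{\rho}=\bm{x}/\alpha$. Let $H:\mathbb{R}_{>0}\to\mathbb{R}$ be a strictly convex $C^2$ function with $H''>0$, write $h=H'$, and let $$V(\bm{x})=\alpha\sum_{i=1}^n H(\rho_i)=\alpha\sum_{i=1}^n H(x_i/\alpha).$$ For $a,b>0$ define $K_h(a,b)=\dfrac{a-b}{h(a)-h(b)}$ if $a\neq b$ and $K_h(a,a)=1/H''(a)$. Define the $n\times n$ matrix $\mathbf{G}^{-1}(\bm{x})$ by $[\mathbf{G}^{-1}(\bm{x})]_{ij}=-\alpha\,w_{ij}K_h(\rho_i,\rho_j)$ for $\{i,j\}\in E$, $[\mathbf{G}^{-1}(\bm{x})]_{ij}=0$ for $i\ne j$ with $\{i,j\}\notin E$, and $[\mathbf{G}^{-1}(\bm{x})]_{ii}=\sum_{j:\{i,j\}\in E}\alpha\,w_{ij}K_h(\rho_i,\rho_j)$. Then for every $\bm{x}\in M(\alpha)$, $\mathbf{G}^{-1}(\bm{x})$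 is a symmetric positive semidefinite matrix with kernel $\{c\bm{1}:c\in\mathbb{R}\}$, its entries depend continuously on $\bm{x}$, and $$-\mathbf{L}\bm{x}=-\mathbf{G}^{-1}(\bm{x})\,\nabla V(\bm{x}).$$ That is, the consensus dynamics on $M(\alpha)$ is a gradient descent flow of $V$ with respect to the (Riemannian) structure defined by $\mathbf{G}^{-1}(\cdot)$.
   Context: The Laplacian of the weighted undirected graph is $\mathbf{L}=[l_{ij}]$ with $l_{ij}=-w_{ij}$ for $\{i,j\}\in E$, $l_{ij}=0$ for other $i\ne j$, and $l_{ii}=\sum_{j:\{i,j\}\in E}w_{ij}$. The consensus value of $\bm{x}(0)\in M(\alpha)$ is $\alpha$, and $M(\alpha)$ is invariant under the dynamics. The gradient $\nabla V$ is the Euclidean gradient with respect to $\bm{x}$, so $\partial V/\partial x_i=H'(\rho_i)$. *)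

(* Defs.v *)
From HB Require Import structures.
From mathcomp Require Import all_boot all_order all_algebra.
From mathcomp Require Import all_classical all_reals all_analysis.
Set Implicit Arguments. Unset Strict Implicit. Unset Printing Implicit Defensive.
Import Order.TTheory GRing.Theory Num.Theory.
Import numFieldNormedType.Exports.
Local Open Scope ring_scope.
Local Open Scope classical_set_scope.

Section Defs.
Variables (R : realType) (n : nat).

Definition laplacian (e : rel 'I_n) (w : 'I_n -> 'I_n -> R) : 'M[R]_n :=
  \matrix_(i, j)
    (if i == j then \sum_(k | e i k) w i k
     else if e i j then - w i j else 0).

Definition Mset (alpha : R) : set 'cV[R]_n :=
  [set x | (forall i, 0 < x i 0) /\ (\sum_i x i 0) / n%:R = alpha].

Definition hder (H : R -> R) : R -> R := derive1 H.
Definition H2 (H : R -> R) : R -> R := derive1 (derive1 H).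

Definition Kh (H : R -> R) (a b : R) : R :=
  if a != b then (a - b) / (hder H a - hder H b) else (H2 H a)^-1.

Definition Ginv (e : rel 'I_n) (w : 'I_n -> 'I_n -> R) (H : R -> R)
  (alpha : R) (x : 'cV[R]_n) : 'M[R]_n :=
  \matrix_(i, j)
    (if i == j then \sum_(k | e i k) alpha * w i k * Kh H (x i 0 / alpha) (x k 0 / alpha)
     else if e i j then - (alpha * w i j * Kh H (x i 0 / alpha) (x j 0 / alpha))
     else 0).

Definition Vfun (H : R -> R) (alpha : R) (x : 'cV[R]_n) : R :=
  alpha * \sum_i H (x i 0 / alpha).

Definition gradV (H : R -> R) (alpha : R) (x : 'cV[R]_n) : 'cV[R]_n :=
  \col_i derive1 (fun t : R => Vfun H alpha (x + t *: delta_mx i 0)) 0.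

End Defs.

(* Main.v *)
Require Import Defs.
From HB Require Import structures.
From mathcomp Require Import all_boot all_order all_algebra.
From mathcomp Require Import all_classical all_reals all_analysis.
From mathcomp Require Import lra.
Import Order.TTheory GRing.Theory Num.Theory.
Import numFieldNormedType.Exports.
Local Open Scope ring_scope.
Local Open Scope classical_set_scope.
Set Implicit Arguments. Unset Strict Implicit.


Section An.
Variables (R : realType) (H : R -> R).
Hypothesis hD : forall a : R, 0 < a -> derivable H a 1.
Hypothesis hD2 : forall a : R, 0 < a -> derivable (derive1 H) a 1.
Hypothesis hC : forall a : R, 0 < a -> {for a, continuous (H2 H)}.
Hypothesis hP : forall a : R, 0 < a -> 0 < H2 H a.

Lemma mvt_h a b : 0 < a -> a < b ->
  exists2 c, a < c < b & hder H b - hder H a = H2 H c * (b - a).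
Proof.
move=> a0 ab.
have [||c cab ->] := @MVT R (hder H) (H2 H) a b ab; last first.
- by exists c => //; move: cab; rewrite in_itv.
- apply: derivable_within_continuous => x; rewrite in_itv /= => /andP[ax _].
  by apply: hD2; apply: lt_le_trans ax.
- move=> x; rewrite in_itv /= => /andP[ax _].
  have x0 : 0 < x by apply: lt_trans ax.
  rewrite /H2 derive1E; exact/derivableP/hD2.
Qed.

Definition D (a b : R) := if a != b then (hder H a - hder H b) / (a - b) else H2 H a.

Lemma D_mvt a b : 0 < a -> 0 < b ->
  exists c, ((a <= c <= b) \/ (b <= c <= a)) /\ D a b = H2 H c.
Proof.
move=> a0 b0; rewrite /D; case: eqP => [<-|/eqP ab]; first by exists a; rewrite lexx; split => //; left.
case: (ltgtP a b) ab => // ab _.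
- have [c /andP[c1 c2] E] := mvt_h a0 ab; exists c; split; first by left; rewrite !ltW.
  rewrite -opprB E -mulrN opprB mulfK //; by rewrite subr_eq0 lt_eqF.
- have [c /andP[c1 c2] E] := mvt_h b0 ab; exists c; split; first by right; rewrite !ltW.
  rewrite E mulfK //; by rewrite subr_eq0 gt_eqF.
Qed.

Lemma D_gt0 a b : 0 < a -> 0 < b -> 0 < D a b.
Proof.
move=> a0 b0; have [c [Hc ->]] := D_mvt a0 b0; apply: hP.
by case: Hc => /andP[h1 _]; apply: lt_le_trans h1.
Qed.

Lemma Kh_D a b : Kh H a b = (D a b)^-1.
Proof. by rewrite /Kh /D; case: ifP => // _; rewrite invf_div. Qed.


Lemma hcont c : 0 < c -> {for c, continuous (hder H)}.
Proof. move=> c0; apply: differentiable_continuous; apply/derivable1_diffP; exact: hD2. Qed.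

Lemma D_cvg {T} (F : set_system T) {FF : Filter F} (u v : T -> R) (a0 b0 : R) :
  0 < a0 -> 0 < b0 -> u @ F --> a0 -> v @ F --> b0 ->
  (fun t => D (u t) (v t)) @ F --> D a0 b0.
Proof.
move=> a0p b0p ua vb.
have [ab|ab] := eqVneq a0 b0; last first.
  have uvc : (fun t => u t - v t) @ F --> a0 - b0 by apply: cvgB.
  have gcvg : (fun t => (hder H (u t) - hder H (v t)) / (u t - v t)) @ F --> D a0 b0.
    rewrite /D (negbTE ab); apply: cvgM; first apply: cvgB.
    - exact: (continuous_cvg _ (hcont a0p)).
    - exact: (continuous_cvg _ (hcont b0p)).
    apply: cvgV => //; by rewrite subr_eq0.
  apply: cvg_trans gcvg; apply: near_eq_cvg.
  have ne : 0 < `|a0 - b0| by rewrite normr_gt0 subr_eq0.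
  move/cvgrPdist_lt : uvc => /(_ _ ne) Hn.
  near=> t.
  have : `|a0 - b0 - (u t - v t)| < `|a0 - b0| by near: t.
  rewrite /D; case: eqP => // ->; by rewrite subrr subr0 ltxx.
subst b0.
apply/cvgrPdist_lt => eps eps0.
have := hC a0p; move/cvgrPdist_lt => /(_ eps eps0) /nbhs_ballP [d d0 hd].
have md : 0 < Num.min d a0 by rewrite lt_min d0 a0p.
move/cvgrPdist_lt : ua => /(_ _ md) ua.
move/cvgrPdist_lt : vb => /(_ _ md) vb.
near=> t.
have U : `|a0 - u t| < Num.min d a0 by near: t.
have V : `|a0 - v t| < Num.min d a0 by near: t.
rewrite !lt_min !ltr_distlC in U V.
move: U V => /andP[/andP[U1 U2] /andP[U3 U4]] /andP[/andP[V1 V2] /andP[V3 V4]].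
have up : 0 < u t by rewrite subrr in U3.
have vp : 0 < v t by rewrite subrr in V3.
have [c [Hc ->]] := D_mvt up vp.
rewrite /D eqxx /=.
apply: hd => /=.
rewrite -ball_normE /ball_ /= ltr_distlC.
case: Hc => /andP[c1 c2]; apply/andP; split.
- exact: lt_le_trans U1 c1.
- exact: le_lt_trans c2 V2.
- exact: lt_le_trans V1 c1.
- exact: le_lt_trans c2 U2.
Unshelve. all: by end_near.
Qed.

Lemma Kh_cvg {T} (F : set_system T) {FF : Filter F} (u v : T -> R) (a0 b0 : R) :
  0 < a0 -> 0 < b0 -> u @ F --> a0 -> v @ F --> b0 ->
  (fun t => Kh H (u t) (v t)) @ F --> Kh H a0 b0.
Proof.
move=> a0p b0p ua vb; rewrite Kh_D.
under eq_cvg do rewrite Kh_D.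
apply: cvgV; first by rewrite gt_eqF // D_gt0.
exact: D_cvg.
Qed.

Lemma Kh_sym a b : Kh H a b = Kh H b a.
Proof.
have [->|ab] := eqVneq a b; first by [].
rewrite /Kh (negbTE ab).
have ba : (b != a) by rewrite eq_sym.
rewrite (negbTE ba) /=.
by rewrite -(opprB b a) -(opprB (hder H b)) invrN mulrNN.
Qed.

Lemma Kh_gt0 a b : 0 < a -> 0 < b -> 0 < Kh H a b.
Proof. by move=> a0 b0; rewrite Kh_D invr_gt0 D_gt0. Qed.

Lemma Kh_mul a b : 0 < a -> 0 < b -> Kh H a b * (hder H a - hder H b) = a - b.
Proof.
move=> a0 b0; have [->|ab] := eqVneq a b; first by rewrite !subrr mulr0.
have := D_gt0 a0 b0; rewrite Kh_D /D (negbTE ab) /= invf_div => Dp.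
rewrite divfK; first by [].
apply/eqP => h0; by rewrite h0 mul0r ltxx in Dp.
Qed.

End An.
Lemma gradV_E (R : realType) (n : nat) (H : R -> R) (alpha : R) (x : 'cV[R]_n) i :
  (forall a : R, 0 < a -> derivable H a 1) ->
  0 < alpha -> 0 < x i 0 -> gradV H alpha x i 0 = hder H (x i 0 / alpha).
Proof.
move=> hD a0 x0; rewrite /gradV mxE.
set C := \sum_(k | k != i) H (x k 0 / alpha).
have -> : (fun t => Vfun H alpha (x + t *: delta_mx i 0)) =
    (fun t => alpha * H ((x i 0 + t) / alpha) + alpha * C).
  apply/funext => t; rewrite /Vfun (bigD1 i) //= mulrDr !mxE eqxx /= mulr1.
  congr (_ + alpha * _); apply: eq_bigr => k ki; rewrite !mxE (negbTE ki) /= mulr0 addr0 //.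
have gd : is_derive (0:R) 1 (fun t : R => (x i 0 + t) / alpha) alpha^-1.
  have := is_deriveM (is_deriveD (is_derive_cst (x i 0) (0:R) 1) (is_derive_id (0:R) 1))
     (is_derive_cst alpha^-1 (0:R) 1).
  move/is_derive_eq => /(_ alpha^-1); apply.
  by rewrite scaler0 !add0r; apply: mulr1.
have Hd : is_derive ((fun t : R => (x i 0 + t) / alpha) 0) 1 H (hder H (x i 0 / alpha)).
  rewrite addr0 /hder derive1E; apply: derivableP; apply: hD; exact: divr_gt0.
have cd := @is_derive1_comp R H (fun t => (x i 0 + t)/alpha) 0 _ _ Hd gd.
have := is_deriveD (is_deriveZ alpha cd) (is_derive_cst (alpha * C) (0:R) 1).
move/is_derive_eq => /(_ (hder H (x i 0 / alpha))) => dd.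
rewrite derive1E; apply: derive_val; apply: dd.
rewrite addr0; rewrite [_ *: _]mulrC divfK //; exact: lt0r_neq0.
Qed.

Section Lap.
Variables (R : realType) (n : nat) (e : rel 'I_n).
Hypothesis e_sym : forall i j, e i j = e j i.
Hypothesis eirr : forall i, ~~ e i i.

Definition Lap (c : 'I_n -> 'I_n -> R) : 'M[R]_n :=
  \matrix_(i, j) (if i == j then \sum_(k | e i k) c i k else if e i j then - c i j else 0).

Definition Tw (c : 'I_n -> 'I_n -> R) i k := if e i k then c i k else 0.

Lemma Lap_mul c (v : 'cV[R]_n) i :
  (Lap c *m v) i 0 = \sum_k Tw c i k * (v i 0 - v k 0).
Proof.
rewrite mxE (bigD1 i) //= mxE eqxx.
have -> : \sum_(j | j != i) Lap c i j * v j 0 = \sum_(j | j != i) - (Tw c i j * v j 0).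
  by apply: eq_bigr => j ji; rewrite mxE eq_sym (negbTE ji) /Tw; case: (e i j); rewrite ?mulNr ?mul0r ?oppr0.
rewrite sumrN.
have -> : \sum_(j | j != i) Tw c i j * v j 0 = \sum_j Tw c i j * v j 0.
  by rewrite [RHS](bigD1 i) //= /Tw (negbTE (eirr i)) mul0r add0r.
have -> : \sum_(k | e i k) c i k = \sum_k Tw c i k by rewrite /Tw big_mkcond.
by rewrite mulr_suml -sumrB; apply: eq_bigr => k _; rewrite mulrBr.
Qed.

Lemma Lap_tr c : (forall i j, c i j = c j i) -> (Lap c)^T = Lap c.
Proof.
move=> csym; apply/matrixP => i j; rewrite !mxE eq_sym.
by case: eqP => [->|_] //; rewrite e_sym csym.
Qed.

Lemma Lap_quad c (v : 'cV[R]_n) :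
  (v^T *m Lap c *m v) 0 0 = \sum_i v i 0 * (Lap c *m v) i 0.
Proof. by rewrite -mulmxA mxE; apply: eq_bigr => i _; rewrite mxE. Qed.

Lemma Lap_quad2 c (v : 'cV[R]_n) : (forall i j, c i j = c j i) ->
  2 * (v^T *m Lap c *m v) 0 0 = \sum_i \sum_k Tw c i k * (v i 0 - v k 0) ^+ 2.
Proof.
move=> csym; rewrite Lap_quad.
have E1 : \sum_i v i 0 * (Lap c *m v) i 0 = \sum_i \sum_k Tw c i k * (v i 0 - v k 0) * v i 0.
  by apply: eq_bigr => i _; rewrite Lap_mul mulr_sumr; apply: eq_bigr => k _; rewrite mulrC.
have E2 : \sum_i v i 0 * (Lap c *m v) i 0 = \sum_i \sum_k Tw c i k * (v k 0 - v i 0) * v k 0.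
  rewrite E1 exchange_big /=; apply: eq_bigr => i _; apply: eq_bigr => k _.
  by rewrite /Tw e_sym csym.
rewrite mulr2n mulrDl mul1r {1}E1 E2 -big_split /=; apply: eq_bigr => i _.
rewrite -big_split /=; apply: eq_bigr => k _.
rewrite -[v k 0 - v i 0]opprB mulrN mulNr -mulrBr -mulrA; congr (_ * _).
Qed.


Lemma Tw_ge0 c i k : (forall i j, e i j -> 0 < c i j) -> 0 <= Tw c i k.
Proof. by move=> cp; rewrite /Tw; case: ifP => // /cp /ltW. Qed.

Lemma Lap_psd c (v : 'cV[R]_n) : (forall i j, c i j = c j i) ->
  (forall i j, e i j -> 0 < c i j) -> 0 <= (v^T *m Lap c *m v) 0 0.
Proof.
move=> csym cp; have := Lap_quad2 v csym.
have : 0 <= \sum_i \sum_k Tw c i k * (v i 0 - v k 0) ^+ 2.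
  by apply: sumr_ge0 => i _; apply: sumr_ge0 => k _; apply: mulr_ge0; [exact: Tw_ge0 cp|apply: sqr_ge0].
by move=> h1 h2; rewrite -h2 pmulr_rge0 in h1.
Qed.

Lemma connect_eq (f : 'I_n -> R) : (forall i k, e i k -> f i = f k) ->
  forall i j, connect e i j -> f i = f j.
Proof.
move=> hf i j /connectP [p pth ->]; elim: p i pth => //= a p IH i /andP[eia pth].
by rewrite (hf _ _ eia); apply: IH.
Qed.

Hypothesis econn : forall i j, connect e i j.

Lemma Lap_ker c (v : 'cV[R]_n) : (forall i j, c i j = c j i) ->
  (forall i j, e i j -> 0 < c i j) ->
  (Lap c *m v = 0 <-> exists k : R, v = k *: const_mx 1).
Proof.
move=> csym cp; split => [Hv|[k ->]]; last first.
  apply/matrixP => i j; rewrite (ord1 j) Lap_mul [RHS]mxE big1 // => l _.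
  by rewrite !mxE subrr mulr0.
have Q0 : (v^T *m Lap c *m v) 0 0 = 0.
  by rewrite Lap_quad big1 // => i _; rewrite Hv mxE mulr0.
have := Lap_quad2 v csym; rewrite Q0 mulr0 => /esym S0.
have T0 : forall i, \sum_k Tw c i k * (v i 0 - v k 0) ^+ 2 = 0.
  move=> i; apply: (psumr_eq0P _ S0) => // j _.
  by apply: sumr_ge0 => k _; apply: mulr_ge0; [exact: Tw_ge0 cp|apply: sqr_ge0].
have Ee : forall i k, e i k -> v i 0 = v k 0.
  move=> i k eik; have := psumr_eq0P _ (T0 i) (i:=k) isT.
  rewrite /Tw eik => /(_ _) /eqP; rewrite mulf_eq0 sqrf_eq0 subr_eq0 (gt_eqF (cp _ _ eik)) /=.
  move=> h; apply/eqP/h => l _; apply: mulr_ge0; [exact: Tw_ge0 cp|apply: sqr_ge0].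
case: (pickP (fun _ : 'I_n => true)) => [i0 _|none].
  exists (v i0 0 : R); apply/matrixP => i j; rewrite (ord1 j) !mxE mulr1.
  have := @connect_eq (fun i => v i 0) Ee i i0 (econn i i0). by [].
by exists 0; apply/matrixP => i; have := none i.
Qed.

End Lap.
Unset Implicit Arguments.
Theorem theorem2 (R : realType) (n : nat) (e : rel 'I_n)
  (w : 'I_n -> 'I_n -> R) (H : R -> R) (alpha : R) :
  (forall i j, e i j = e j i) ->
  (forall i, ~~ e i i) ->
  (forall i j, connect e i j) ->
  (forall i j, w i j = w j i) ->
  (forall i j, e i j -> 0 < w i j) ->
  0 < alpha ->
  (forall a : R, 0 < a -> derivable H a 1) ->
  (forall a : R, 0 < a -> derivable (derive1 H) a 1) ->
  (forall a : R, 0 < a -> {for a, continuous (H2 H)}) ->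
  (forall a : R, 0 < a -> 0 < H2 H a) ->
  (forall x, x \in @Mset R n alpha ->
     let G := Ginv e w H alpha x in
     G^T = G /\
     (forall v : 'cV[R]_n, 0 <= (v^T *m G *m v) 0 0) /\
     (forall v : 'cV[R]_n, G *m v = 0 <-> exists c : R, v = c *: const_mx 1) /\
     - (laplacian e w *m x) = - (G *m gradV H alpha x)) /\
  (forall i j, {within @Mset R n alpha, continuous (fun x => Ginv e w H alpha x i j)}).
Proof.
move=> esymm eirr econn wsym wpos a0 hD hD2 hC hP; split.
  move=> x; rewrite inE => -[xpos _].
  have rp : forall i, 0 < x i 0 / alpha by move=> i; apply: divr_gt0.
  pose c := fun i k => alpha * w i k * Kh H (x i 0 / alpha) (x k 0 / alpha).
  have GE : Ginv e w H alpha x = Lap e c by [].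
  have csym : forall i k, c i k = c k i by move=> i k; rewrite /c wsym Kh_sym.
  have cpos : forall i k, e i k -> 0 < c i k.
    move=> i k eik; rewrite /c; apply: mulr_gt0; first exact: mulr_gt0 a0 (wpos _ _ eik).
    exact: Kh_gt0.
  cbv zeta; rewrite GE.
  split; first exact: Lap_tr.
  split; first by move=> v; apply: Lap_psd.
  split; first by move=> v; apply: Lap_ker.
  congr (- _); apply/matrixP => i j; rewrite (ord1 j).
  have -> : laplacian e w = Lap e w by [].
  rewrite !Lap_mul //; apply: eq_bigr => k _; rewrite /Tw; case: ifP => eik; last by rewrite !mul0r.
  rewrite !gradV_E // /c -mulrA Kh_mul // -mulrBl (mulrC alpha) -mulrA; congr (_ * _).
  by rewrite mulrC divfK; last exact: lt0r_neq0.
move=> i j; apply: continuous_in_subspaceT => x; rewrite inE => -[xpos _].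
have rp : forall i, 0 < x i 0 / alpha by move=> k; apply: divr_gt0.
have coordc : forall k, (fun y : 'cV[R]_n => y k 0 / alpha) @ x --> x k 0 / alpha.
  move=> k; have cc := @coord_continuous R n 1 k 0 x.
  exact: (cvgM cc (cvg_cst alpha^-1)).
have termc : forall k, (fun y : 'cV[R]_n => alpha * w i k * Kh H (y i 0 / alpha) (y k 0 / alpha)) @ x
   --> alpha * w i k * Kh H (x i 0 / alpha) (x k 0 / alpha).
  move=> k; have KK : (fun y : 'cV[R]_n => Kh H (y i 0 / alpha) (y k 0 / alpha)) @ x --> Kh H (x i 0 / alpha) (x k 0 / alpha) := Kh_cvg hD2 hC hP (rp i) (rp k) (FF := nbhs_filter x) (coordc i) (coordc k).
  exact: (cvgM (cvg_cst (alpha * w i k)) KK).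
Timeout 60 have -> : (fun y => Ginv e w H alpha y i j) = (fun y => if i == j then \sum_(k | e i k) alpha * w i k * Kh H (y i 0 / alpha) (y k 0 / alpha)
     else if e i j then - (alpha * w i j * Kh H (y i 0 / alpha) (y j 0 / alpha)) else 0).
  by apply/funext => y; rewrite /Ginv mxE.
rewrite /continuous_at.
case: (i == j).
  apply: (@cvg_big _ _ +%R 0 (fun k => e i k) add_continuous _ (nbhs x) (index_enum _)
     (fun k y => alpha * w i k * Kh H (y i 0/alpha) (y k 0/alpha))
     (fun k => alpha * w i k * Kh H (x i 0/alpha) (x k 0/alpha)) (nbhs_filter x)) => k _.
  exact: termc.
case: (e i j); last first.
  exact: (@cvg_cst _ 0 _ _ (nbhs_filter x)).
exact: (cvgN (termc j)).
Qed.
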